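(* Let $P$ be a Poisson conformal algebra with $\lambda$-products $(\cdot_\lambda\cdot)$ and $[\cdot_\lambda\cdot]$, and let $L\subseteq P$ be an $H$-submodule closed under $[\cdot_\lambda\cdot]$ (so $L$ is a Lie conformal algebra). Then $P$ is a conformal module over $L$ with respect to $$\langle a_\lambda u\rangle=[a_\lambda u]+\lambda(a_\lambda u),\qquad a\in L,\ u\in P.$$
   Context: $\Bbbk$ is a field of characteristic $0$, $H=\Bbbk[\partial]$. A $\lambda$-product on an $H$-module $C$ is a $\Bbbk$-bilinear map $(x,y)\mapsto(x_\lambda y)=\sum_{n\ge0}\frac{\lambda^n}{n!}(x_{(n)}y)\in C[\lambda]$ satisfying $(\partial x_\lambda y)=-\lambda(x_\lambda y)$, $(x_\lambda\partial y)=(\partial+\lambda)(x_\lambda y)$; $(x_{-\partial-\lambda}y)$ means $\sum_n\frac{(-\partial-\lambda)^n}{n!}(x_{(n)}y)$ with $\partial$ acting on coefficients. A Poisson conformal algebra is an $H$-module $P$ with two $\lambda$-products such that $(\cdot_\lambda\cdot)$ is associative, $(x_\lambda(y_\mu z))=((x_\lambda y)_{\lambda+\mu}z)$, and commutative, $(x_\lambda y)=(y_{-\partial-\lambda}x)$; $[\cdot_\lambda\cdot]$ satisfies $[x_\lambda y]=-[y_{-\partial-\lambda}x]$ and $[x_\lambda[y_\mu z]]-[y_\mu[x_\lambda z]]=[[x_\lambda y]_{\lambda+\mu}z]$; and $[x_\lambda(y_\mu z)]=([x_\lambda y]_{\lambda+\mu}z)+(y_\mu[x_\lambda z])$ for all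 $x,y,z$. A conformal module over a Lie conformal algebra $L$ is an $H$-module $M$ with a $\Bbbk$-bilinear map $L\times M\to M[\lambda]$, $(a,u)\mapsto\langle a_\lambda u\rangle$, such that $\langle\partial a_\lambda u\rangle=-\lambda\langle a_\lambda u\rangle$, $\langle a_\lambda\partial u\rangle=(\partial+\lambda)\langle a_\lambda u\rangle$, and $\langle a_\lambda\langle b_\mu u\rangle\rangle-\langle b_\mu\langle a_\lambda u\rangle\rangle=\langle[a_\lambda b]_{\lambda+\mu}u\rangle$ for all $a,b\in L$, $u\in M$. *)

(* Defs.v *)
From HB Require Import structures.
From mathcomp Require Import all_boot all_order all_algebra.
Set Implicit Arguments. Unset Strict Implicit. Unset Printing Implicit Defensive.
Import Order.TTheory GRing.Theory Num.Theory.
Local Open Scope ring_scope.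

(* An H-module (H = k[d]) is a k-vector space V with a k-linear map d : V -> V.
   A polynomial in C[lambda] is a coefficient list s : seq V; the coefficient of
   lambda^n is s`_n (= nth 0 s n); trailing zeros are irrelevant, equality of
   polynomials is [peq].  A lambda-product is a map V -> V -> seq V giving the
   coefficients of (x_lambda y) = sum_n lambda^n (x_lambda y)`_n
   (so (x_lambda y)`_n = x_(n) y / n! in the paper's notation).
   A polynomial in C[lambda,mu] is a coefficient function nat -> nat -> V,
   F i j = coefficient of lambda^i mu^j. *)

Section Defs.
Variable k : fieldType.
Variable V : lmodType k.

Definition coef (s : seq V) (n : nat) : V := nth 0 s n.

Definition peq (s t : seq V) : Prop := forall n, coef s n = coef t n.

Definition padd (s t : seq V) : seq V :=
  mkseq (fun n => coef s n + coef t n) (maxn (size s) (size t)).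
Definition pscale (a : k) (s : seq V) : seq V := map (fun v => a *: v) s.
Definition popp (s : seq V) : seq V := map (fun v => - v) s.
Definition plam (s : seq V) : seq V := 0 :: s.
(* action of (d + lambda) on V[lambda]; d acts on coefficients *)
Definition pdlam (d : V -> V) (s : seq V) : seq V := padd (map d s) (plam s).
(* p(-d-lambda) = sum_n (-d-lambda)^n s_n, computed by Horner's scheme *)
Definition subst_neg (d : V -> V) (s : seq V) : seq V :=
  foldr (fun c acc => padd [:: c] (popp (pdlam d acc))) [::] s.

Definition Hmod (d : V -> V) : Prop :=
  forall (a : k) (x y : V), d (a *: x + y) = a *: d x + d y.

Definition lambda_product (d : V -> V) (P : V -> V -> seq V) : Prop :=
  [/\ (forall a x y z, peq (P (a *: x + y) z) (padd (pscale a (P x z)) (P y z))),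
      (forall a x y z, peq (P z (a *: x + y)) (padd (pscale a (P z x)) (P z y))),
      (forall x y, peq (P (d x) y) (popp (plam (P x y)))) &
      (forall x y, peq (P x (d y)) (pdlam d (P x y)))].

(* p(lambda+mu) for p in V[nu]: coefficient of lambda^i mu^j *)
Definition subst_sum (s : seq V) (i j : nat) : V :=
  'C(i + j, i)%:R *: coef s (i + j).

(* (x_lambda (y_mu z)) for products P (outer) and Q (inner):
   coefficient of lambda^i mu^j *)
Definition inner (P Q : V -> V -> seq V) (x y z : V) (i j : nat) : V :=
  coef (P x (coef (Q y z) j)) i.
(* (y_mu (x_lambda z)) for products P (outer) and Q (inner) *)
Definition inner_swap (P Q : V -> V -> seq V) (y x z : V) (i j : nat) : V :=
  coef (P y (coef (Q x z) i)) j.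
(* ((x_lambda y)_{lambda+mu} z), inner product P, outer product Q:
   = sum_n lambda^n ((x_lambda y)`_n _{lambda+mu} z) *)
Definition comp (P Q : V -> V -> seq V) (x y z : V) (i j : nat) : V :=
  \sum_(n < size (P x y))
     (if (n <= i)%N then subst_sum (Q (coef (P x y) n) z) (i - n) j else 0).

Definition poisson_conformal (d : V -> V) (prod br : V -> V -> seq V) : Prop :=
  [/\ Hmod d, lambda_product d prod, lambda_product d br,
      [/\ (* associativity *)
      (forall x y z i j, inner prod prod x y z i j = comp prod prod x y z i j),
      (* commutativity *)
      (forall x y, peq (prod x y) (subst_neg d (prod y x))) &
      (* skew-symmetry *)
      (forall x y, peq (br x y) (popp (subst_neg d (br y x))))] &
    [/\
      (* Jacobi identity *)
      (forall x y z i j,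
          inner br br x y z i j - inner_swap br br y x z i j = comp br br x y z i j) &
      (* Leibniz rule *)
      (forall x y z i j,
          inner br prod x y z i j
          = comp br prod x y z i j + inner_swap prod br y x z i j)]].

Definition Hsubmodule (d : V -> V) (L : pred V) : Prop :=
  [/\ 0 \in L, (forall a x y, x \in L -> y \in L -> a *: x + y \in L) &
      (forall x, x \in L -> d x \in L)].

Definition lclosed (L : pred V) (br : V -> V -> seq V) : Prop :=
  forall a b n, a \in L -> b \in L -> coef (br a b) n \in L.

Definition conformal_module (d : V -> V) (L : pred V) (br act : V -> V -> seq V)
  : Prop :=
  [/\ (forall a b c u, a \in L -> b \in L ->
          peq (act (c *: a + b) u) (padd (pscale c (act a u)) (act b u))),
      (forall a c u v, a \in L ->
          peq (act a (c *: u + v)) (padd (pscale c (act a u)) (act a v))),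
      (forall a u, a \in L -> peq (act (d a) u) (popp (plam (act a u)))),
      (forall a u, a \in L -> peq (act a (d u)) (pdlam d (act a u))) &
      (forall a b u i j, a \in L -> b \in L ->
          inner act act a b u i j - inner_swap act act b a u i j
          = comp br act a b u i j)].

End Defs.

(* Main.v *)
Require Import Defs.
From HB Require Import structures.
From mathcomp Require Import all_boot all_order all_algebra.
Import GRing.Theory.
Local Open Scope ring_scope.

Section Aux.
Variable k : fieldType.
Variable V : lmodType k.
Implicit Types (s t : seq V) (x y z : V).

Lemma coef_map (f : V -> V) s n : f 0 = 0 -> coef (map f s) n = f (coef s n).
Proof.
move=> f0; rewrite /coef; case: (ltnP n (size s)) => hn.
  by rewrite (nth_map 0).
by rewrite !nth_default ?size_map.
Qed.

Lemma coef_padd s t n : coef (padd s t) n = coef s n + coef t n.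
Proof.
rewrite /padd /coef; case: (ltnP n (maxn (size s) (size t))) => hn.
  by rewrite nth_mkseq.
rewrite nth_default ?size_mkseq //.
rewrite geq_max in hn; case/andP: hn => h1 h2.
by rewrite !nth_default // addr0.
Qed.

Lemma coef_pscale a s n : coef (pscale a s) n = a *: coef s n.
Proof. by rewrite coef_map ?scaler0. Qed.

Lemma coef_popp s n : coef (popp s) n = - coef s n.
Proof. by rewrite coef_map ?oppr0. Qed.

Definition lamc s n : V := if n is n'.+1 then coef s n' else 0.

Lemma coef_plam s n : coef (plam s) n = lamc s n.
Proof. by case: n. Qed.

Lemma lamc0 s : lamc s 0 = 0. Proof. by []. Qed.
Lemma lamcS s n : lamc s n.+1 = coef s n. Proof. by []. Qed.

Lemma coef_nil n : coef ([::] : seq V) n = 0.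
Proof. by rewrite /coef nth_nil. Qed.

Definition sL (f : nat -> nat -> V) i j := if i is i'.+1 then f i' j else 0.
Definition sM (f : nat -> nat -> V) i j := if j is j'.+1 then f i j' else 0.

Definition G (Q : V -> V -> seq V) z s i j :=
  \sum_(n < i.+1) subst_sum (Q (coef s n) z) (i - n) j.

Lemma SS_shift q1 q2 (c : k) : (forall n, coef q2 n = c *: lamc q1 n) ->
  forall p b, subst_sum q2 p b = c *: (sL (subst_sum q1) p b + sM (subst_sum q1) p b).
Proof.
move=> h [|p] [|b]; rewrite /subst_sum h /sL /sM.
- by rewrite addn0 lamc0 addr0 !scaler0.
- by rewrite !add0n lamcS !bin0 !scale1r add0r.
- by rewrite !addn0 lamcS !binn !scale1r addr0.
- rewrite !addnS !addSn lamcS binS -scalerDl -natrD scalerA mulrC -scalerA.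
  by rewrite addnC.
Qed.

Lemma G_shift Q1 Q2 z c s : (forall x n, coef (Q2 x z) n = c *: lamc (Q1 x z) n) ->
  forall a b, G Q2 z s a b = c *: (sL (G Q1 z s) a b + sM (G Q1 z s) a b).
Proof.
move=> h a b; rewrite /G.
under eq_bigr do rewrite (@SS_shift _ _ _ (h _)).
rewrite -scaler_sumr big_split /=; congr (_ *: (_ + _)).
- case: a => [|a] /=; first by rewrite big_ord1.
  rewrite big_ord_recr /= subnn addr0; apply: eq_bigr => -[n hn] _ /=.
  by rewrite subSn.
- by case: b => [|b] //=; rewrite big1.
Qed.

Lemma sum_trunc (g : nat -> V) m N : (m <= N)%N -> (forall n, (m <= n)%N -> g n = 0) ->
  \sum_(n < N) g n = \sum_(n < m) g n.
Proof.
move=> + hg; elim: N => [|N IH]; first by rewrite leqn0 => /eqP ->.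
rewrite leq_eqVlt; case/orP => [/eqP -> // | hlt].
by rewrite big_ord_recr /= IH // hg // addr0.
Qed.

Lemma comp_G (P Q : V -> V -> seq V) x y z i j :
  (forall n, coef (Q 0 z) n = 0) ->
  Defs.comp P Q x y z i j = G Q z (P x y) i j.
Proof.
move=> h0; rewrite /Defs.comp /G.
set s := P x y.
set F := fun n : nat => subst_sum (Q (coef s n) z) (i - n) j.
have -> : \sum_(n < size s) (if (n <= i)%N then subst_sum (Q (coef s n) z) (i - n) j else 0)
   = \sum_(n < maxn (size s) i.+1) (if (n <= i)%N then F n else 0).
  rewrite (@sum_trunc (fun n => if (n <= i)%N then F n else 0) (size s)) ?leq_maxl //.
  move=> n hn; rewrite /F /coef nth_default // /subst_sum.
  by rewrite [coef _ _]h0 scaler0; case: ifP.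
rewrite (@sum_trunc (fun n => if (n <= i)%N then F n else 0) i.+1) ?leq_maxr //.
  by apply: eq_bigr => -[n hn] _ /=; rewrite -ltnS hn.
by move=> n hn; rewrite leqNgt hn.
Qed.


Lemma SSsym (q : seq V) a b : subst_sum q a b = subst_sum q b a.
Proof.
rewrite /subst_sum [(b + a)%N]addnC.
have e : 'C(a + b, (a + b) - a) = 'C(a + b, a) := bin_sub (leq_addr b a).
by rewrite addKn in e; rewrite e.
Qed.

Variable d : V -> V.
Hypothesis Hd : Hmod d.

Lemma dD x y : d (x + y) = d x + d y.
Proof. by have := Hd 1 x y; rewrite !scale1r. Qed.

Lemma d0 : d 0 = 0.
Proof.
have e := dD 0 0; rewrite addr0 in e.
by apply: (@addrI _ (d 0)); rewrite addr0 -e.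
Qed.

Section Q.
Variable Q : V -> V -> seq V.
Hypothesis HQ : lambda_product d Q.

Lemma QD x y z n : coef (Q (x + y) z) n = coef (Q x z) n + coef (Q y z) n.
Proof.
case: HQ => H1 _ _ _.
by have := H1 1 x y z n; rewrite scale1r coef_padd coef_pscale scale1r.
Qed.

Lemma Q0 z n : coef (Q 0 z) n = 0.
Proof.
have e := QD 0 0 z n; rewrite addr0 in e.
by apply: (@addrI _ (coef (Q 0 z) n)); rewrite addr0 -e.
Qed.

Lemma QN x z n : coef (Q (- x) z) n = - coef (Q x z) n.
Proof.
have e := QD x (- x) z n; rewrite subrr Q0 in e.
by rewrite -[RHS]addr0 e addKr.
Qed.

Lemma Qd x z n : coef (Q (d x) z) n = -1 *: lamc (Q x z) n.
Proof.
case: HQ => _ _ H3 _.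
by rewrite H3 coef_popp coef_plam scaleN1r.
Qed.

Lemma QDr x y z n : coef (Q z (x + y)) n = coef (Q z x) n + coef (Q z y) n.
Proof.
case: HQ => _ H2 _ _.
by have := H2 1 x y z n; rewrite scale1r coef_padd coef_pscale scale1r.
Qed.

Lemma Q0r z n : coef (Q z 0) n = 0.
Proof.
have e := QDr 0 0 z n; rewrite addr0 in e.
by apply: (@addrI _ (coef (Q z 0) n)); rewrite addr0 -e.
Qed.

Lemma Qdr x y n : coef (Q x (d y)) n = d (coef (Q x y) n) + lamc (Q x y) n.
Proof.
case: HQ => _ _ _ H4.
by rewrite H4 /pdlam coef_padd coef_map ?d0 // coef_plam.
Qed.

Variable z : V.

Lemma G_peq s t : peq s t -> forall i j, G Q z s i j = G Q z t i j.
Proof. by move=> h i j; apply: eq_bigr => n _; rewrite h. Qed.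

Lemma G_padd s t i j : G Q z (padd s t) i j = G Q z s i j + G Q z t i j.
Proof.
rewrite /G -big_split; apply: eq_bigr => n _.
by rewrite coef_padd /subst_sum QD scalerDr.
Qed.

Lemma G_popp s i j : G Q z (popp s) i j = - G Q z s i j.
Proof.
rewrite /G -sumrN; apply: eq_bigr => n _.
by rewrite coef_popp /subst_sum QN scalerN.
Qed.

Lemma G_nil i j : G Q z [::] i j = 0.
Proof. by rewrite /G big1 // => n _; rewrite coef_nil /subst_sum Q0 scaler0. Qed.

Lemma G_cons c t a b : G Q z (c :: t) a b = subst_sum (Q c z) a b + sL (G Q z t) a b.
Proof.
rewrite /G big_ord_recl subn0; congr (_ + _).
case: a => [|a]; first by rewrite big_ord0.
by apply: eq_bigr => n _; rewrite subSS.
Qed.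

Lemma G_mapd s a b : G Q z (map d s) a b = - (sL (G Q z s) a b + sM (G Q z s) a b).
Proof.
transitivity (G (fun x z => Q (d x) z) z s a b).
  by apply: eq_bigr => n _; rewrite coef_map ?d0.
rewrite (@G_shift Q _ z (-1)) ?scaleN1r // => x n; exact: Qd.
Qed.

Lemma G_plam s a b : G Q z (plam s) a b = sL (G Q z s) a b.
Proof. by rewrite G_cons /subst_sum Q0 scaler0 add0r. Qed.

Lemma G_swap t a b : G Q z (subst_neg d t) b a = G Q z t a b.
Proof.
elim: t a b => [|c t IH] a b; first by rewrite /= !G_nil.
change (subst_neg d (c :: t)) with (padd [:: c] (popp (pdlam d (subst_neg d t)))).
set s' := subst_neg d t.
rewrite G_padd G_popp /pdlam G_padd G_mapd G_plam G_cons [in RHS]G_cons.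
have -> : sL (G Q z [::]) b a = 0 by case: b => //= b; rewrite G_nil.
have -> : sM (G Q z s') b a = sL (G Q z t) a b by case: a => //= a; rewrite IH.
rewrite SSsym addr0 opprD opprK [sL _ b a + _]addrC addrK.
by [].
Qed.

End Q.

Lemma grp (A A' G0 X2 X3 X4 Y2 Y3 Y4 C1 C2 : V) :
  A = G0 + A' -> X3 = C1 + Y2 -> Y3 = - C2 + X2 -> X4 = Y4 ->
  (A + X2) + (X3 + X4) - ((A' + Y2) + (Y3 + Y4)) = G0 + C2 + C1.
Proof.
move=> -> -> -> ->.
rewrite !opprD !opprK !addrA.
rewrite (ACl (1*9*4*2*7*3*10*5*8*6*11)) /=.
by rewrite !addrK.
Qed.

Lemma sL0 f j : sL f 0 j = 0. Proof. by []. Qed.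
Lemma sLS f i j : sL f i.+1 j = f i j. Proof. by []. Qed.
Lemma sM0 f i : sM f i 0 = 0. Proof. by []. Qed.
Lemma sMS f i j : sM f i j.+1 = f i j. Proof. by []. Qed.

Lemma G_addQ Q1 Q2 z s i j :
  G (fun x z => padd (Q1 x z) (Q2 x z)) z s i j = G Q1 z s i j + G Q2 z s i j.
Proof.
rewrite /G -big_split; apply: eq_bigr => n _.
by rewrite /subst_sum coef_padd scalerDr.
Qed.

Section Main.
Variables (prod br : V -> V -> seq V).
Hypothesis Hpc : poisson_conformal d prod br.

Definition act a u := padd (br a u) (plam (prod a u)).

Lemma Hprod : lambda_product d prod. Proof. by case: Hpc. Qed.
Lemma Hbr : lambda_product d br. Proof. by case: Hpc. Qed.

Lemma coef_act a u n : coef (act a u) n = coef (br a u) n + lamc (prod a u) n.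
Proof. by rewrite /act coef_padd coef_plam. Qed.

Lemma lamcD (Q : V -> V -> seq V) (HQ : lambda_product d Q) a x y n :
  lamc (Q a (x + y)) n = lamc (Q a x) n + lamc (Q a y) n.
Proof. by case: n => [|n]; rewrite ?lamc0 ?addr0 // !lamcS (QDr _ HQ). Qed.

Lemma actD a x y n : coef (act a (x + y)) n = coef (act a x) n + coef (act a y) n.
Proof. by rewrite !coef_act (QDr _ Hbr) (lamcD _ Hprod) addrACA. Qed.

Lemma act0l u n : coef (act 0 u) n = 0.
Proof. by rewrite coef_act (Q0 _ Hbr); case: n => [|n]; rewrite ?lamcS ?(Q0 _ Hprod) addr0. Qed.

Lemma act0r a n : coef (act a 0) n = 0.
Proof. by rewrite coef_act (Q0r _ Hbr); case: n => [|n]; rewrite ?lamcS ?(Q0r _ Hprod) addr0. Qed.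

Lemma E1 a b u i j : inner act act a b u i j =
  (inner br br a b u i j + sL (inner prod br a b u) i j) +
  (sM (inner br prod a b u) i j + sL (sM (inner prod prod a b u)) i j).
Proof.
rewrite /inner [coef (act b u) j]coef_act actD !coef_act.
case: i => [|i]; case: j => [|j];
  rewrite ?sL0 ?sLS ?sM0 ?sMS ?lamc0 ?lamcS ?(Q0r _ Hbr) ?(Q0r _ Hprod) ?addr0 //.
Qed.


Lemma E2 a b u i j : inner_swap act act b a u i j =
  (inner_swap br br b a u i j + sM (inner_swap prod br b a u) i j) +
  (sL (inner_swap br prod b a u) i j + sL (sM (inner_swap prod prod b a u)) i j).
Proof.
rewrite /inner_swap [coef (act a u) i]coef_act actD !coef_act.
case: i => [|i]; case: j => [|j];
  rewrite ?sL0 ?sLS ?sM0 ?sMS ?lamc0 ?lamcS ?(Q0r _ Hbr) ?(Q0r _ Hprod) ?addr0 //.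
Qed.

Lemma E3 a b u i j : Defs.comp br act a b u i j =
  Defs.comp br br a b u i j + sL (G prod u (br a b)) i j + sM (G prod u (br a b)) i j.
Proof.
rewrite comp_G; last exact: act0l.
rewrite [Defs.comp br br _ _ _ _ _]comp_G; last exact: (Q0 _ Hbr).
rewrite (G_addQ br (fun x z => plam (prod x z))).
rewrite (@G_shift prod (fun x z => plam (prod x z)) u 1 (br a b)) ?scale1r ?addrA //.
by move=> x n; rewrite coef_plam scale1r.
Qed.

Lemma main_conf (L : pred V) : conformal_module d L br act.
Proof.
have [H1 H2 H3 H4] := Hbr; have [P1 P2 P3 P4] := Hprod.
case: Hpc => _ _ _ [Hass Hcom Hskew] [Hjac Hleib].
split.
- move=> a b c u _ _ n; rewrite coef_padd coef_pscale !coef_act H1 coef_padd coef_pscale.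
  case: n => [|n]; rewrite ?lamc0 ?lamcS ?P1 ?coef_padd ?coef_pscale ?scaler0 ?addr0 //.
  by rewrite scalerDr addrACA.
- move=> a c u v _ n; rewrite coef_padd coef_pscale !coef_act H2 coef_padd coef_pscale.
  case: n => [|n]; rewrite ?lamc0 ?lamcS ?P2 ?coef_padd ?coef_pscale ?scaler0 ?addr0 //.
  by rewrite scalerDr addrACA.
- move=> a u _ n; rewrite coef_popp coef_plam !coef_act (Qd _ Hbr).
  case: n => [|n]; rewrite ?lamc0 ?lamcS ?scaler0 ?oppr0 ?addr0 //.
  by rewrite coef_act (Qd _ Hprod) !scaleN1r opprD.
- move=> a u _ n; rewrite /pdlam coef_padd coef_map ?d0 // coef_plam !coef_act (Qdr _ Hbr).
  case: n => [|n]; rewrite ?lamc0 ?lamcS ?addr0 //.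
  by rewrite coef_act (Qdr _ Hprod) dD addrACA.
- move=> a b u i j _ _; rewrite E1 E2 E3; apply: grp.
  + by rewrite -Hjac subrK.
  + case: j => [|j]; rewrite ?sM0 ?sMS ?addr0 //.
    rewrite Hleib comp_G //; exact: (Q0 _ Hprod).
  + case: i => [|i]; rewrite ?sL0 ?sLS ?oppr0 ?addr0 //.
    change (inner br prod b a u j i = - G prod u (br a b) i j + inner prod br a b u i j).
    rewrite Hleib comp_G; last exact: (Q0 _ Hprod).
    rewrite (@G_peq prod u _ _ (Hskew b a)) (G_popp _ Hprod) (G_swap _ Hprod).
    by [].
  + case: i => [|i]; case: j => [|j]; rewrite ?sL0 ?sLS ?sM0 ?sMS //.
    change (inner prod prod a b u i j = inner prod prod b a u j i).
    rewrite !Hass comp_G; last exact: (Q0 _ Hprod).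
    rewrite [Defs.comp _ _ _ _ _ _ _]comp_G; last exact: (Q0 _ Hprod).
    by rewrite (@G_peq prod u _ _ (Hcom b a)) (G_swap _ Hprod).
Qed.

End Main.
End Aux.

Theorem mainTheorem5 (k : fieldType) (V : lmodType k)
  (d : V -> V) (prod br : V -> V -> seq V) (L : pred V) :
  [pchar k] =i pred0 ->
  poisson_conformal d prod br ->
  Hsubmodule d L ->
  lclosed L br ->
  conformal_module d L br (fun a u => padd (br a u) (plam (prod a u))).
Proof.
move=> _ Hpc _ _.
have Hd : Hmod d by case: Hpc.
exact: (@main_conf k V d Hd prod br Hpc L).
Qed.
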